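(* Let $\mathcal{R}=\{z\in\mathbb{C}:\Re(z)>0\}$ and let $\Phi:\mathcal{R}\to\mathbb{C}$ be analytic and satisfy: (a) for all $0<a<b<\infty$, $\lim_{y\to\pm\infty} e^{-\pi|y|}\int_a^b\left|\frac{\Phi(x+iy)}{x+iy}\right|\mathrm{d}x=0$; (b) for every $\eta>0$, $\sup_{x\ge\eta}\int_{-\infty}^\infty\left|\frac{\Phi(x+iy)}{x+iy}\right|e^{-\pi|y|}\,\mathrm{d}y<\infty$; (c) $\lim_{x\to\infty}\int_{-\infty}^\infty\left|\frac{\Phi(x+iy)}{x+iy}\right|e^{-\pi|y|}\,\mathrm{d}y=0$. Let $\delta>0$. Then there exists $c(\delta,\Phi)>0$, depending only on $\delta$ and $\Phi$, such that $|\Phi(z)|\le c(\delta,\Phi)|z|e^{\pi|y|}$ for all $z=x+iy$ with $\Re(z)\ge\delta$. *)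

(* Defs.v *)
From Stdlib Require Import Reals.
From Coquelicot Require Import Coquelicot.
Open Scope R_scope.

Definition analytic_right_half_plane (Phi : C -> C) : Prop :=
  forall z : C, 0 < Re z -> @ex_derive C_AbsRing C_NormedModule Phi z.

Definition absratio (Phi : C -> C) (x y : R) : R :=
  Cmod (Phi (x, y) / (x, y))%C.

Definition cond_a (Phi : C -> C) : Prop :=
  forall a b : R, 0 < a -> a < b ->
    is_lim (fun y => exp (- PI * Rabs y) * RInt (fun x => absratio Phi x y) a b)
           p_infty 0 /\
    is_lim (fun y => exp (- PI * Rabs y) * RInt (fun x => absratio Phi x y) a b)
           m_infty 0.

Definition line_integral (Phi : C -> C) (x l : R) : Prop :=
  is_RInt_gen (fun y => absratio Phi x y * exp (- PI * Rabs y))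
              (Rbar_locally m_infty) (Rbar_locally p_infty) l.

Definition cond_b (Phi : C -> C) : Prop :=
  forall eta : R, 0 < eta ->
    exists M : R, forall x : R, eta <= x ->
      exists l : R, line_integral Phi x l /\ l <= M.

Definition cond_c (Phi : C -> C) : Prop :=
  forall eps : R, 0 < eps ->
    exists X : R, forall x : R, X <= x ->
      exists l : R, line_integral Phi x l /\ l <= eps.

(* Main.v *)
Require Import Defs.
From Stdlib Require Import Reals.
From Coquelicot Require Import Coquelicot.
Open Scope R_scope.
From Stdlib Require Import Lra FunctionalExtensionality.

Lemma Cmod_le_abs (z : C) : Cmod z <= Rabs (fst z) + Rabs (snd z).
Proof.
  destruct z as [x y]; unfold Cmod; simpl.
  rewrite <- (sqrt_Rsqr (Rabs x + Rabs y)) by (pose proof (Rabs_pos x); pose proof (Rabs_pos y); lra).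
  apply sqrt_le_1_alt. unfold Rsqr.
  pose proof (Rsqr_abs x) as Ex; pose proof (Rsqr_abs y) as Ey. unfold Rsqr in *.
  pose proof (Rabs_pos x); pose proof (Rabs_pos y). nra.
Qed.

Lemma abs_fst_le (z : C) : Rabs (fst z) <= Cmod z.
Proof. pose proof (Rmax_Cmod z). pose proof (Rmax_l (Rabs (fst z)) (Rabs (snd z))). lra. Qed.
Lemma abs_snd_le (z : C) : Rabs (snd z) <= Cmod z.
Proof. pose proof (Rmax_Cmod z). pose proof (Rmax_r (Rabs (fst z)) (Rabs (snd z))). lra. Qed.

Definition Ccont_at (g : C -> C) (w : C) : Prop :=
  forall eps, 0 < eps -> exists del, 0 < del /\ forall w', Cmod (w' - w) < del -> Cmod (g w' - g w) < eps.

Lemma Cmod_fst_snd_sub (a b : C) : Cmod (a - b) <= Rabs (fst a - fst b) + Rabs (snd a - snd b).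
Proof. apply (Cmod_le_abs (a - b)%C). Qed.

Lemma exd_ccont (g : C -> C) (w : C) : ex_derive (K:=C_AbsRing) (V:=C_NormedModule) g w -> Ccont_at g w.
Proof.
  intros H. apply ex_derive_continuous in H.
  intros eps Heps.
  assert (He : 0 < eps / 2) by lra.
  destruct (proj1 (filterlim_locally (T:=AbsRing_UniformSpace C_AbsRing) (U:=C_NormedModule) (F := @locally (AbsRing_UniformSpace C_AbsRing) w) g (g w)) H (mkposreal _ He)) as [del Hd].
  exists (pos del). split. apply cond_pos.
  intros w' Hw'. destruct (Hd w') as [B1 B2]. exact Hw'.
  pose proof (Cmod_fst_snd_sub (g w') (g w)).
  change (Rabs (fst (g w') - fst (g w)) < eps / 2) in B1.
  change (Rabs (snd (g w') - snd (g w)) < eps / 2) in B2.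
  lra.
Qed.

Lemma deriv_approx (g : C -> C) (w0 : C) : ex_derive (K:=C_AbsRing) (V:=C_NormedModule) g w0 ->
  exists l : C, forall eps, 0 < eps -> exists rho, 0 < rho /\ forall w,
   Cmod (w - w0) < rho ->
   Cmod (g w - g w0 - l * (w - w0)) <= eps * Cmod (w - w0).
Proof.
  intros [l [_ Hl]]. exists l. intros eps Heps.
  destruct (Hl w0 (fun P H => H) (mkposreal eps Heps)) as [rho Hr].
  exists (pos rho). split. apply cond_pos. intros w H1.
  specialize (Hr w H1). simpl in Hr.
  change (Cmod (g w - g w0 - (w - w0) * l) <= eps * Cmod (w - w0)) in Hr.
  replace (l * (w - w0))%C with ((w - w0) * l)%C by ring. exact Hr.
Qed.

Lemma exR_plus (f g : R -> R) a b : ex_RInt f a b -> ex_RInt g a b -> ex_RInt (fun t => f t + g t) a b.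
Proof. intros; exact (ex_RInt_plus f g a b H H0). Qed.
Lemma exR_minus (f g : R -> R) a b : ex_RInt f a b -> ex_RInt g a b -> ex_RInt (fun t => f t - g t) a b.
Proof. intros; exact (ex_RInt_minus f g a b H H0). Qed.
Lemma exR_scal (f : R -> R) k a b : ex_RInt f a b -> ex_RInt (fun t => k * f t) a b.
Proof. intros; exact (ex_RInt_scal f a b k H). Qed.
Lemma R_plus (f g : R -> R) a b : ex_RInt f a b -> ex_RInt g a b -> RInt (fun t => f t + g t) a b = RInt f a b + RInt g a b.
Proof. intros; exact (RInt_plus f g a b H H0). Qed.
Lemma R_minus (f g : R -> R) a b : ex_RInt f a b -> ex_RInt g a b -> RInt (fun t => f t - g t) a b = RInt f a b - RInt g a b.
Proof. intros; exact (RInt_minus f g a b H H0). Qed.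
Lemma R_scal (f : R -> R) k a b : ex_RInt f a b -> RInt (fun t => k * f t) a b = k * RInt f a b.
Proof. intros; exact (RInt_scal f a b k H). Qed.
Lemma R_chasles (f : R -> R) a b c : ex_RInt f a b -> ex_RInt f b c -> RInt f a b + RInt f b c = RInt f a c.
Proof. intros; exact (RInt_Chasles f a b c H H0). Qed.

Definition CI (h : R -> C) (a b : R) : C :=
  (RInt (fun t => fst (h t)) a b, RInt (fun t => snd (h t)) a b).
Definition CIok (h : R -> C) (a b : R) : Prop :=
  ex_RInt (fun t => fst (h t)) a b /\ ex_RInt (fun t => snd (h t)) a b.

Lemma CI_chasles h a b c : CIok h a b -> CIok h b c -> (CI h a b + CI h b c)%C = CI h a c.
Proof.
  intros [H1 H2] [H3 H4]; unfold CI, Cplus; simpl.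
  rewrite R_chasles by assumption. rewrite R_chasles by assumption. reflexivity.
Qed.

Lemma CIok_plus h1 h2 a b : CIok h1 a b -> CIok h2 a b -> CIok (fun t => h1 t + h2 t)%C a b.
Proof. intros [? ?] [? ?]; split; simpl; apply exR_plus; auto. Qed.
Lemma CIok_minus h1 h2 a b : CIok h1 a b -> CIok h2 a b -> CIok (fun t => h1 t - h2 t)%C a b.
Proof. intros [? ?] [? ?]; split; simpl; apply exR_plus; auto; apply (ex_RInt_opp (V:=R_NormedModule)); auto. Qed.
Lemma CIok_cmul (al : C) h a b : CIok h a b -> CIok (fun t => al * h t)%C a b.
Proof. intros [? ?]; split; simpl.
  apply exR_minus; apply exR_scal; auto.
  apply exR_plus; apply exR_scal; auto. Qed.

Lemma CI_plus h1 h2 a b : CIok h1 a b -> CIok h2 a b -> CI (fun t => h1 t + h2 t)%C a b = (CI h1 a b + CI h2 a b)%C.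
Proof. intros [? ?] [? ?]; unfold CI, Cplus; simpl. rewrite !R_plus by auto. reflexivity. Qed.
Lemma CI_minus h1 h2 a b : CIok h1 a b -> CIok h2 a b -> CI (fun t => h1 t - h2 t)%C a b = (CI h1 a b - CI h2 a b)%C.
Proof. intros [? ?] [? ?]; unfold CI, Cminus, Cplus, Copp; simpl.
  rewrite !R_plus by (auto; apply (ex_RInt_opp (V:=R_NormedModule)); auto).
  rewrite !(RInt_opp (V:=R_CompleteNormedModule)) by auto. reflexivity. Qed.
Lemma CI_cmul (al : C) h a b : CIok h a b -> CI (fun t => al * h t)%C a b = (al * CI h a b)%C.
Proof. intros [? ?]; unfold CI, Cmult; simpl.
  rewrite R_minus by (apply exR_scal; auto). rewrite R_plus by (apply exR_scal; auto).
  rewrite !R_scal by auto. reflexivity. Qed.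

Lemma Rint_abs_bound (f B : R -> R) a b : a <= b -> ex_RInt f a b -> ex_RInt B a b ->
  (forall t, a <= t <= b -> Rabs (f t) <= B t) -> Rabs (RInt f a b) <= RInt B a b.
Proof.
  intros Hab Hf HB H. apply Rabs_le. split.
  - rewrite <- (Ropp_involutive (RInt f a b)). apply Ropp_le_contravar.
    change (- RInt f a b) with (opp (RInt f a b)).
    rewrite <- (RInt_opp (V:=R_CompleteNormedModule)) by auto.
    apply RInt_le; auto. apply (ex_RInt_opp (V:=R_NormedModule)); auto.
    intros t Ht. specialize (H t ltac:(lra)). apply Rabs_le_between in H. unfold opp; simpl. lra.
  - apply RInt_le; auto. intros t Ht. specialize (H t ltac:(lra)). apply Rabs_le_between in H. lra.
Qed.

Lemma CI_bound_int h (B : R -> R) a b : a <= b -> CIok h a b -> ex_RInt B a b ->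
  (forall t, a <= t <= b -> Cmod (h t) <= B t) -> Cmod (CI h a b) <= 2 * RInt B a b.
Proof.
  intros Hab [H1 H2] HB H. eapply Rle_trans. apply Cmod_le_abs. unfold CI; simpl.
  assert (Rabs (RInt (fun t => fst (h t)) a b) <= RInt B a b).
  { apply Rint_abs_bound; auto. intros t Ht. eapply Rle_trans. apply abs_fst_le. auto. }
  assert (Rabs (RInt (fun t => snd (h t)) a b) <= RInt B a b).
  { apply Rint_abs_bound; auto. intros t Ht. eapply Rle_trans. apply abs_snd_le. auto. }
  lra.
Qed.

Lemma CI_bound_const h M a b : a <= b -> CIok h a b ->
  (forall t, a <= t <= b -> Cmod (h t) <= M) -> Cmod (CI h a b) <= 2 * ((b - a) * M).
Proof.
  intros Hab Hok H.
  replace ((b - a) * M) with (RInt (fun _ => M) a b).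
  apply CI_bound_int; auto. apply ex_RInt_const.
  rewrite RInt_const. reflexivity.
Qed.

Lemma path_cont (g : C -> C) (P : R -> C) t0 :
  (forall t, Cmod (P t - P t0) <= Rabs (t - t0)) ->
  Ccont_at g (P t0) ->
  continuous (fun t => fst (g (P t))) t0 /\ continuous (fun t => snd (g (P t))) t0 /\
  continuous (fun t => Cmod (g (P t))) t0.
Proof.
  intros HP Hc.
  assert (K : forall eps, 0 < eps -> exists del, 0 < del /\ forall t, Rabs (t - t0) < del ->
     Cmod (g (P t) - g (P t0)) < eps).
  { intros eps Heps. destruct (Hc eps Heps) as [del [Hd H]].
    exists del; split; auto. intros t Ht. apply H. specialize (HP t). lra. }
  split; [|split]; apply filterlim_locally; intros eps;
  destruct (K eps (cond_pos eps)) as [del [Hd H]]; exists (mkposreal del Hd); intros t Ht;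
  specialize (H t Ht).
  - change (Rabs (fst (g (P t)) - fst (g (P t0))) < eps).
    pose proof (abs_fst_le (g (P t) - g (P t0))%C). simpl in H0. unfold Rminus. lra.
  - change (Rabs (snd (g (P t)) - snd (g (P t0))) < eps).
    pose proof (abs_snd_le (g (P t) - g (P t0))%C). simpl in H0. unfold Rminus. lra.
  - change (Rabs (Cmod (g (P t)) - Cmod (g (P t0))) < eps).
    assert (Rabs (Cmod (g (P t)) - Cmod (g (P t0))) <= Cmod (g (P t) - g (P t0))%C).
    { apply Rabs_le. pose proof (Cmod_triangle (g (P t) - g (P t0))%C (g (P t0))).
      pose proof (Cmod_triangle (g (P t0) - g (P t))%C (g (P t))).
      replace (g (P t) - g (P t0) + g (P t0))%C with (g (P t)) in H0 by ring.
      replace (g (P t0) - g (P t) + g (P t))%C with (g (P t0)) in H1 by ring.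
      replace (g (P t0) - g (P t))%C with (- (g (P t) - g (P t0)))%C in H1 by ring.
      rewrite Cmod_opp in H1. lra. }
    lra.
Qed.

Lemma hline_cont g v t0 : Ccont_at g (t0, v) ->
  continuous (fun t => fst (g (t, v))) t0 /\ continuous (fun t => snd (g (t,v))) t0 /\
  continuous (fun t => Cmod (g (t,v))) t0.
Proof.
  intros H. apply (path_cont g (fun t => (t, v)) t0); auto.
  intros t. replace ((t, v) - (t0, v))%C with (RtoC (t - t0)).
  rewrite Cmod_R; lra. unfold RtoC, Cminus, Cplus, Copp; simpl; f_equal; ring.
Qed.
Lemma vline_cont g u t0 : Ccont_at g (u, t0) ->
  continuous (fun t => fst (g (u, t))) t0 /\ continuous (fun t => snd (g (u,t))) t0 /\
  continuous (fun t => Cmod (g (u,t))) t0.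
Proof.
  intros H. apply (path_cont g (fun t => (u, t)) t0); auto.
  intros t. replace ((u, t) - (u, t0))%C with (Ci * RtoC (t - t0))%C.
  rewrite Cmod_mult, Cmod_Ci, Cmod_R; lra. unfold RtoC, Ci, Cminus, Cmult, Cplus, Copp; simpl; f_equal; ring.
Qed.

Lemma CIok_h (g : C -> C) v a b : a <= b -> (forall t, a <= t <= b -> Ccont_at g (t, v)) ->
  CIok (fun t => g (t, v)) a b.
Proof.
  intros Hab H; split; apply (ex_RInt_continuous (V:=R_CompleteNormedModule)); rewrite Rmin_left, Rmax_right by lra;
  intros t Ht; apply (hline_cont g v t (H t Ht)).
Qed.
Lemma CIok_v (g : C -> C) u a b : a <= b -> (forall t, a <= t <= b -> Ccont_at g (u, t)) ->
  CIok (fun t => g (u, t)) a b.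
Proof.
  intros Hab H; split; apply (ex_RInt_continuous (V:=R_CompleteNormedModule)); rewrite Rmin_left, Rmax_right by lra;
  intros t Ht; apply (vline_cont g u t (H t Ht)).
Qed.

Definition Rect (g : C -> C) a b c d : C :=
  (CI (fun t => g (t, c)) a b + Ci * CI (fun t => g (b, t)) c d
   - CI (fun t => g (t, d)) a b - Ci * CI (fun t => g (a, t)) c d)%C.
Definition RectOk (g : C -> C) a b c d : Prop :=
  CIok (fun t => g (t, c)) a b /\ CIok (fun t => g (b, t)) c d /\
  CIok (fun t => g (t, d)) a b /\ CIok (fun t => g (a, t)) c d.

Lemma RectOk_cont g a b c d : a <= b -> c <= d ->
  (forall w, a <= fst w <= b -> c <= snd w <= d -> Ccont_at g w) ->
  RectOk g a b c d.
Proof.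
  intros Hab Hcd H. split; [|split; [|split]].
  - apply CIok_h; [exact Hab|]; intros t Ht; apply H; simpl; lra.
  - apply CIok_v; [exact Hcd|]; intros t Ht; apply H; simpl; lra.
  - apply CIok_h; [exact Hab|]; intros t Ht; apply H; simpl; lra.
  - apply CIok_v; [exact Hcd|]; intros t Ht; apply H; simpl; lra.
Qed.

Lemma Rect_minus g h a b c d : RectOk g a b c d -> RectOk h a b c d ->
  Rect (fun w => g w - h w)%C a b c d = (Rect g a b c d - Rect h a b c d)%C.
Proof.
  intros (?&?&?&?) (?&?&?&?). unfold Rect.
  rewrite !(CI_minus (fun t => g _) (fun t => h _)) by auto. ring.
Qed.
Lemma Rect_plus g h a b c d : RectOk g a b c d -> RectOk h a b c d ->
  Rect (fun w => g w + h w)%C a b c d = (Rect g a b c d + Rect h a b c d)%C.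
Proof.
  intros (?&?&?&?) (?&?&?&?). unfold Rect.
  rewrite !(CI_plus (fun t => g _) (fun t => h _)) by auto. ring.
Qed.
Lemma Rect_cmul al g a b c d : RectOk g a b c d ->
  Rect (fun w => al * g w)%C a b c d = (al * Rect g a b c d)%C.
Proof.
  intros (?&?&?&?). unfold Rect.
  rewrite !(CI_cmul al (fun t => g _)) by auto. ring.
Qed.
Lemma RectOk_minus g h a b c d : RectOk g a b c d -> RectOk h a b c d -> RectOk (fun w => g w - h w)%C a b c d.
Proof. intros (?&?&?&?) (?&?&?&?). split; [|split; [|split]]; apply (CIok_minus (fun t => g _) (fun t => h _)); auto. Qed.
Lemma RectOk_plus g h a b c d : RectOk g a b c d -> RectOk h a b c d -> RectOk (fun w => g w + h w)%C a b c d.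
Proof. intros (?&?&?&?) (?&?&?&?). split; [|split; [|split]]; apply (CIok_plus (fun t => g _) (fun t => h _)); auto. Qed.
Lemma RectOk_cmul al g a b c d : RectOk g a b c d -> RectOk (fun w => al * g w)%C a b c d.
Proof. intros (?&?&?&?). split; [|split; [|split]]; apply (CIok_cmul al (fun t => g _)); auto. Qed.

Lemma Rect_bound g a b c d M : a <= b -> c <= d -> RectOk g a b c d ->
  (forall t, a <= t <= b -> Cmod (g (t, c)) <= M /\ Cmod (g (t, d)) <= M) ->
  (forall t, c <= t <= d -> Cmod (g (a, t)) <= M /\ Cmod (g (b, t)) <= M) ->
  Cmod (Rect g a b c d) <= 4 * ((b - a) + (d - c)) * M.
Proof.
  intros Hab Hcd (H1&H2&H3&H4) Hh Hv. unfold Rect.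
  pose proof (CI_bound_const _ M _ _ Hab H1 (fun t Ht => proj1 (Hh t Ht))).
  pose proof (CI_bound_const _ M _ _ Hcd H2 (fun t Ht => proj2 (Hv t Ht))).
  pose proof (CI_bound_const _ M _ _ Hab H3 (fun t Ht => proj2 (Hh t Ht))).
  pose proof (CI_bound_const _ M _ _ Hcd H4 (fun t Ht => proj1 (Hv t Ht))).
  set (A := CI (fun t => g (t, c)) a b) in *.
  set (B := CI (fun t => g (b, t)) c d) in *.
  set (Cc := CI (fun t => g (t, d)) a b) in *.
  set (D := CI (fun t => g (a, t)) c d) in *.
  assert (Cmod (Ci * B) = Cmod B) by (rewrite Cmod_mult, Cmod_Ci; ring).
  assert (Cmod (Ci * D) = Cmod D) by (rewrite Cmod_mult, Cmod_Ci; ring).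
  unfold Cminus.
  eapply Rle_trans. apply Cmod_triangle. rewrite Cmod_opp.
  eapply Rle_trans. apply Rplus_le_compat_r. apply Cmod_triangle. rewrite Cmod_opp.
  eapply Rle_trans. apply Rplus_le_compat_r. apply Rplus_le_compat_r. apply Cmod_triangle.
  lra.
Qed.

Lemma Rect_split g a b c d m n :
  RectOk g a m c n -> RectOk g m b c n -> RectOk g a m n d -> RectOk g m b n d ->
  Rect g a b c d = (Rect g a m c n + Rect g m b c n + Rect g a m n d + Rect g m b n d)%C.
Proof.
  intros (A1&A2&A3&A4) (B1&B2&B3&B4) (C1&C2&C3&C4) (D1&D2&D3&D4).
  unfold Rect.
  rewrite <- (CI_chasles (fun t => g (t, c)) a m b) by auto.
  rewrite <- (CI_chasles (fun t => g (t, d)) a m b) by auto.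
  rewrite <- (CI_chasles (fun t => g (b, t)) c n d) by auto.
  rewrite <- (CI_chasles (fun t => g (a, t)) c n d) by auto.
  ring.
Qed.

Lemma RInt_aff (f : R -> R) p q a b : (forall t, f t = p + q * t) ->
  is_RInt f a b (p * (b - a) + q * (b * b - a * a) / 2).
Proof.
  intros H. apply (is_RInt_ext (fun t => p + q * t)). intros; rewrite H; auto.
  replace (p * (b - a) + q * (b * b - a * a) / 2) with
    (minus ((fun t => p * t + q * (t * t) / 2) b) ((fun t => p * t + q * (t * t) / 2) a)).
  apply (is_RInt_derive (V := R_CompleteNormedModule) (fun t => p * t + q * (t * t) / 2)).
  - intros x _. auto_derive; auto. field.
  - intros x _. apply (ex_derive_continuous (K:=R_AbsRing) (V:=R_NormedModule)). auto_derive; auto.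
  - unfold minus, plus, opp; simpl. field.
Qed.

Lemma CI_haff al be c a b : CI (fun t => al + be * (t, c))%C a b =
  ((fst al - snd be * c) * (b - a) + fst be * (b * b - a * a) / 2,
   (snd al + fst be * c) * (b - a) + snd be * (b * b - a * a) / 2).
Proof.
  destruct al as [a1 a2], be as [b1 b2]. unfold CI; simpl. f_equal.
  - apply is_RInt_unique. apply RInt_aff. intros; ring.
  - apply is_RInt_unique. apply RInt_aff. intros; ring.
Qed.
Lemma CI_vaff al be u a b : CI (fun t => al + be * (u, t))%C a b =
  ((fst al + fst be * u) * (b - a) - snd be * (b * b - a * a) / 2,
   (snd al + snd be * u) * (b - a) + fst be * (b * b - a * a) / 2).
Proof.
  destruct al as [a1 a2], be as [b1 b2]. unfold CI; simpl. f_equal.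
  - replace ((a1 + b1 * u) * (b - a) - b2 * (b * b - a * a) / 2) with
      ((a1 + b1 * u) * (b - a) + (- b2) * (b * b - a * a) / 2) by field.
    apply is_RInt_unique. apply RInt_aff. intros; ring.
  - apply is_RInt_unique. apply RInt_aff. intros; ring.
Qed.

Lemma Rect_aff al be a b c d : Rect (fun w => al + be * w)%C a b c d = 0%C.
Proof.
  unfold Rect. rewrite !CI_haff, !CI_vaff.
  destruct al as [a1 a2], be as [b1 b2].
  unfold Cminus, Cplus, Copp, Cmult, Ci, RtoC; simpl. apply injective_projections; simpl; field.
Qed.

Lemma CIok_haff al be c a b : CIok (fun t => al + be * (t, c))%C a b.
Proof.
  destruct al as [a1 a2], be as [b1 b2]. split; simpl.
  - eexists. apply (RInt_aff _ (a1 - b2 * c) b1). intros; ring.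
  - eexists. apply (RInt_aff _ (a2 + b1 * c) b2). intros; ring.
Qed.
Lemma CIok_vaff al be u a b : CIok (fun t => al + be * (u, t))%C a b.
Proof.
  destruct al as [a1 a2], be as [b1 b2]. split; simpl.
  - eexists. apply (RInt_aff _ (a1 + b1 * u) (- b2)). intros; ring.
  - eexists. apply (RInt_aff _ (a2 + b2 * u) b1). intros; ring.
Qed.
Lemma RectOk_aff al be a b c d : RectOk (fun w => al + be * w)%C a b c d.
Proof.
  split; [|split; [|split]].
  - exact (CIok_haff al be c a b).
  - exact (CIok_vaff al be b c d).
  - exact (CIok_haff al be d a b).
  - exact (CIok_vaff al be a c d).
Qed.

Record rc := mkrc { ra : R; rb : R; rcc : R; rd : R }.
Definition RR g (r : rc) := Rect g (ra r) (rb r) (rcc r) (rd r).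
Definition Lr (r : rc) := (rb r - ra r) + (rd r - rcc r).
Definition q1 r := mkrc (ra r) ((ra r + rb r)/2) (rcc r) ((rcc r + rd r)/2).
Definition q2 r := mkrc ((ra r + rb r)/2) (rb r) (rcc r) ((rcc r + rd r)/2).
Definition q3 r := mkrc (ra r) ((ra r + rb r)/2) ((rcc r + rd r)/2) (rd r).
Definition q4 r := mkrc ((ra r + rb r)/2) (rb r) ((rcc r + rd r)/2) (rd r).
Definition bad eps g r := eps * (Lr r * Lr r) < Cmod (RR g r).
Definition step eps g r :=
  if Rlt_dec (eps * (Lr (q1 r) * Lr (q1 r))) (Cmod (RR g (q1 r))) then q1 r else
  if Rlt_dec (eps * (Lr (q2 r) * Lr (q2 r))) (Cmod (RR g (q2 r))) then q2 r else
  if Rlt_dec (eps * (Lr (q3 r) * Lr (q3 r))) (Cmod (RR g (q3 r))) then q3 r else q4 r.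

Definition inside a b c d r := a <= ra r /\ ra r <= rb r /\ rb r <= b /\ c <= rcc r /\ rcc r <= rd r /\ rd r <= d.

Lemma Rect_ext g h a b c d : (forall w, g w = h w) -> Rect g a b c d = Rect h a b c d.
Proof. intros H. replace h with g. reflexivity. apply functional_extensionality; auto. Qed.

Section G.
Variable g : C -> C.
Variables a b c d : R.
Hypothesis Hd : forall w, a <= fst w <= b -> c <= snd w <= d -> ex_derive (K:=C_AbsRing) (V:=C_NormedModule) g w.

Lemma ok_inside r : inside a b c d r -> RectOk g (ra r) (rb r) (rcc r) (rd r).
Proof.
  intros (?&?&?&?&?&?). apply RectOk_cont; auto. intros w Hw1 Hw2. apply exd_ccont, Hd; lra.
Qed.

Lemma step_spec eps r : 0 < eps -> inside a b c d r -> bad eps g r ->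
  let r' := step eps g r in
  inside a b c d r' /\ bad eps g r' /\ ra r <= ra r' /\ rb r' <= rb r /\ rcc r <= rcc r' /\ rd r' <= rd r /\
  rb r' - ra r' = (rb r - ra r) / 2 /\ rd r' - rcc r' = (rd r - rcc r) / 2.
Proof.
  intros Heps Hin Hbad r'.
  assert (Hi := Hin). destruct Hi as (?&?&?&?&?&?).
  assert (I1 : inside a b c d (q1 r)) by (unfold inside, q1; simpl; lra).
  assert (I2 : inside a b c d (q2 r)) by (unfold inside, q2; simpl; lra).
  assert (I3 : inside a b c d (q3 r)) by (unfold inside, q3; simpl; lra).
  assert (I4 : inside a b c d (q4 r)) by (unfold inside, q4; simpl; lra).
  unfold r', step.
  destruct (Rlt_dec _ _) as [B1|B1].
  { repeat split; unfold q1; simpl; try lra; try exact B1; apply I1. }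
  destruct (Rlt_dec _ _) as [B2|B2].
  { repeat split; unfold q2; simpl; try lra; try exact B2; apply I2. }
  destruct (Rlt_dec _ _) as [B3|B3].
  { repeat split; unfold q3; simpl; try lra; try exact B3; apply I3. }
  assert (B4 : bad eps g (q4 r)).
  { apply Rnot_le_lt. intros B4. apply Rnot_lt_le in B1. apply Rnot_lt_le in B2. apply Rnot_lt_le in B3.
    unfold bad in Hbad.
    assert (E : RR g r = (RR g (q1 r) + RR g (q2 r) + RR g (q3 r) + RR g (q4 r))%C).
    { unfold RR. apply Rect_split; [apply (ok_inside (q1 r) I1) | apply (ok_inside (q2 r) I2) |
        apply (ok_inside (q3 r) I3) | apply (ok_inside (q4 r) I4)]. }
    rewrite E in Hbad.
    assert (L1 : Lr (q1 r) = Lr r / 2) by (unfold Lr, q1; simpl; field).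
    assert (L2 : Lr (q2 r) = Lr r / 2) by (unfold Lr, q2; simpl; field).
    assert (L3 : Lr (q3 r) = Lr r / 2) by (unfold Lr, q3; simpl; field).
    assert (L4 : Lr (q4 r) = Lr r / 2) by (unfold Lr, q4; simpl; field).
    rewrite L1 in B1. rewrite L2 in B2. rewrite L3 in B3. rewrite L4 in B4.
    pose proof (Cmod_triangle (RR g (q1 r) + RR g (q2 r) + RR g (q3 r))%C (RR g (q4 r))).
    pose proof (Cmod_triangle (RR g (q1 r) + RR g (q2 r))%C (RR g (q3 r))).
    pose proof (Cmod_triangle (RR g (q1 r)) (RR g (q2 r))).
    lra. }
  repeat split; unfold q4; simpl; try lra; try exact B4; apply I4.
Qed.

Fixpoint seqr eps r0 n := match n with O => r0 | S n => step eps g (seqr eps r0 n) end.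

Lemma seqr_spec eps r0 : 0 < eps -> inside a b c d r0 -> bad eps g r0 -> forall n,
  inside a b c d (seqr eps r0 n) /\ bad eps g (seqr eps r0 n) /\
  rb (seqr eps r0 n) - ra (seqr eps r0 n) = (rb r0 - ra r0) / 2 ^ n /\
  rd (seqr eps r0 n) - rcc (seqr eps r0 n) = (rd r0 - rcc r0) / 2 ^ n.
Proof.
  intros He Hi Hb n. induction n as [|n IH].
  - simpl. split; [exact Hi|split; [exact Hb|split]]; field.
  - destruct IH as (I&B&E1&E2). simpl.
    destruct (step_spec eps _ He I B) as (I'&B'&_&_&_&_&E1'&E2').
    split; [exact I'|split; [exact B'|split]].
    rewrite E1', E1. simpl. field. apply pow_nonzero. lra.
    rewrite E2', E2. simpl. field. apply pow_nonzero. lra.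
Qed.

Lemma seqr_mono eps r0 : 0 < eps -> inside a b c d r0 -> bad eps g r0 -> forall n k,
  ra (seqr eps r0 n) <= ra (seqr eps r0 (n + k)) /\ rb (seqr eps r0 (n + k)) <= rb (seqr eps r0 n) /\
  rcc (seqr eps r0 n) <= rcc (seqr eps r0 (n + k)) /\ rd (seqr eps r0 (n + k)) <= rd (seqr eps r0 n).
Proof.
  intros He Hi Hb n k. induction k as [|k IH].
  - rewrite Nat.add_0_r. lra.
  - rewrite Nat.add_succ_r. simpl.
    destruct (seqr_spec eps r0 He Hi Hb (n + k)) as (I&B&_&_).
    destruct (step_spec eps _ He I B) as (_&_&?&?&?&?&_&_). lra.
Qed.

Lemma pow2_ge n : INR n <= 2 ^ n.
Proof.
  induction n as [|n IH]. simpl; lra.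
  rewrite S_INR. simpl. assert (1 <= 2 ^ n) by (apply pow_R1_Rle; lra). lra.
Qed.

Theorem goursat_aux eps : 0 < eps -> a <= b -> c <= d ->
  Cmod (Rect g a b c d) <= eps * (((b - a) + (d - c)) * ((b - a) + (d - c))).
Proof.
  intros He Hab Hcd.
  set (r0 := mkrc a b c d).
  assert (Hi : inside a b c d r0) by (unfold inside, r0; simpl; lra).
  apply Rnot_lt_le. intros Hb.
  assert (Hb' : bad eps g r0) by exact Hb.
  pose proof (seqr_spec eps r0 He Hi Hb') as SP.
  pose proof (seqr_mono eps r0 He Hi Hb') as MO.
  assert (AB : forall n m, ra (seqr eps r0 n) <= rb (seqr eps r0 m) /\ rcc (seqr eps r0 n) <= rd (seqr eps r0 m)).
  { intros n m. destruct (SP (n + m)%nat) as ((?&?&?&?&?&?)&_).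
    destruct (MO n m) as (M1&M2&M3&M4). destruct (MO m n) as (N1&N2&N3&N4).
    rewrite Nat.add_comm in N1, N2, N3, N4. lra. }
  destruct (completeness (fun x => exists n, x = ra (seqr eps r0 n))) as [u0 [Hu1 Hu2]].
  { exists b. intros x [n ->]. destruct (SP n) as ((?&?&?&?&?&?)&_). lra. }
  { exists a. exists O. reflexivity. }
  destruct (completeness (fun x => exists n, x = rcc (seqr eps r0 n))) as [v0 [Hv1 Hv2]].
  { exists d. intros x [n ->]. destruct (SP n) as ((?&?&?&?&?&?)&_). lra. }
  { exists c. exists O. reflexivity. }
  assert (U : forall n, ra (seqr eps r0 n) <= u0 <= rb (seqr eps r0 n)).
  { intros n. split. apply Hu1. exists n; auto. apply Hu2. intros x [k ->]. apply AB. }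
  assert (V : forall n, rcc (seqr eps r0 n) <= v0 <= rd (seqr eps r0 n)).
  { intros n. split. apply Hv1. exists n; auto. apply Hv2. intros x [k ->]. apply AB. }
  set (w0 := (u0, v0)).
  assert (Hw0 : a <= fst w0 <= b /\ c <= snd w0 <= d).
  { destruct (U O), (V O). simpl in *. lra. }
  destruct (deriv_approx g w0 (Hd w0 (proj1 Hw0) (proj2 Hw0))) as [l Hl].
  assert (He4 : 0 < eps / 4) by lra.
  destruct (Hl _ He4) as [rho [Hrho Happ]].
  set (L0 := (b - a) + (d - c)).
  destruct (INR_archimed rho L0 Hrho) as [n Hn].
  pose proof (pow2_ge n).
  destruct (SP n) as (Inn&Bn&E1&E2).
  set (rn := seqr eps r0 n) in *.
  assert (P2 : 0 < 2 ^ n) by (apply pow_lt; lra).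
  assert (HL : Lr rn < rho).
  { unfold Lr. rewrite E1, E2. unfold r0; simpl.
    replace ((b - a) / 2 ^ n + (d - c) / 2 ^ n) with (L0 / 2 ^ n) by (unfold L0; field; lra).
    apply Rmult_lt_reg_r with (2 ^ n); auto. unfold Rdiv. rewrite Rmult_assoc, Rinv_l by lra.
    nra. }
  set (al := (g w0 - l * w0)%C).
  set (lin := fun w => (al + l * w)%C).
  set (rem := fun w => (g w - lin w)%C).
  destruct Inn as (?&?&?&?&?&?).
  assert (OKg : RectOk g (ra rn) (rb rn) (rcc rn) (rd rn)) by (apply ok_inside; unfold inside; lra).
  assert (OKl : RectOk lin (ra rn) (rb rn) (rcc rn) (rd rn)) by apply RectOk_aff.
  assert (E : RR g rn = (Rect rem (ra rn) (rb rn) (rcc rn) (rd rn) + Rect lin (ra rn) (rb rn) (rcc rn) (rd rn))%C).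
  { unfold RR. rewrite (Rect_ext g (fun w => rem w + lin w)%C).
    apply Rect_plus. apply RectOk_minus; auto. auto.
    intros w. unfold rem. ring. }
  unfold lin in E. rewrite Rect_aff in E. rewrite Cplus_0_r in E.
  assert (Bd : Cmod (Rect rem (ra rn) (rb rn) (rcc rn) (rd rn)) <= 4 * ((rb rn - ra rn) + (rd rn - rcc rn)) * (eps / 4 * Lr rn)).
  { assert (K : forall w, ra rn <= fst w <= rb rn -> rcc rn <= snd w <= rd rn -> Cmod (rem w) <= eps / 4 * Lr rn).
    { intros w Hw1 Hw2. destruct (U n) as [U1 U2]. destruct (V n) as [V1 V2]. fold rn in U1, U2, V1, V2.
      assert (Cw : Cmod (w - w0) <= Lr rn).
      { eapply Rle_trans. apply Cmod_fst_snd_sub. unfold w0; simpl. unfold Lr.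
        assert (Rabs (fst w - u0) <= rb rn - ra rn) by (apply Rabs_le; lra).
        assert (Rabs (snd w - v0) <= rd rn - rcc rn) by (apply Rabs_le; lra). lra. }
      assert (Q : Cmod (rem w) <= eps / 4 * Cmod (w - w0)).
      { replace (rem w) with (g w - g w0 - l * (w - w0))%C by (unfold rem, lin, al; ring).
        apply Happ. lra. }
      eapply Rle_trans. apply Q. apply Rmult_le_compat_l; lra. }
    apply Rect_bound; try lra. apply RectOk_minus; auto.
    - intros t Ht. split; apply K; simpl; lra.
    - intros t Ht. split; apply K; simpl; lra. }
  unfold bad, RR in Bn. fold (RR g rn) in Bn. rewrite E in Bn.
  fold (Lr rn) in Bd.
  assert (0 <= Lr rn) by (unfold Lr; lra).
  nra.
Qed.

Theorem goursat : a <= b -> c <= d -> Rect g a b c d = 0%C.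
Proof.
  intros Hab Hcd. apply Cmod_eq_0.
  set (L := ((b - a) + (d - c)) * ((b - a) + (d - c))).
  assert (0 <= L) by (unfold L; nra).
  pose proof (Cmod_ge_0 (Rect g a b c d)).
  destruct (Req_dec (Cmod (Rect g a b c d)) 0) as [E|E]; auto.
  exfalso.
  set (m := Cmod (Rect g a b c d)) in *.
  assert (Hm : 0 < m) by lra.
  assert (He : 0 < m / (2 * (L + 1))) by (apply Rdiv_lt_0_compat; lra).
  pose proof (goursat_aux _ He Hab Hcd). fold m L in H1.
  assert (m / (2 * (L + 1)) * L < m).
  { unfold Rdiv. apply Rmult_lt_reg_r with (2 * (L + 1)). lra.
    replace (m * / (2 * (L + 1)) * L * (2 * (L + 1))) with (m * L) by (field; lra). nra. }
  lra.
Qed.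
End G.

Notation exdC := (ex_derive (K:=C_AbsRing) (V:=C_NormedModule)).
Notation isdC := (is_derive (K:=C_AbsRing) (V:=C_NormedModule)).

Lemma isdC_intro (f : C -> C) x0 l :
  (forall eps, 0 < eps -> exists rho, 0 < rho /\ forall y, Cmod (y - x0) < rho ->
     Cmod (f y - f x0 - l * (y - x0)) <= eps * Cmod (y - x0)) -> isdC f x0 l.
Proof.
  intros H. split. apply is_linear_scal_l.
  intros x Hx. apply (is_filter_lim_locally_unique (K:=C_AbsRing) (V:=AbsRing_NormedModule C_AbsRing)) in Hx. subst x.
  intros eps. destruct (H eps (cond_pos eps)) as [rho [Hr Hy]].
  exists (mkposreal rho Hr). intros y Hy'. specialize (Hy y Hy').
  change (Cmod (f y - f x0 - (y - x0) * l) <= eps * Cmod (y - x0)).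
  replace ((y - x0) * l)%C with (l * (y - x0))%C by ring. exact Hy.
Qed.

Notation isdA := (is_derive (K:=C_AbsRing) (V:=AbsRing_NormedModule C_AbsRing)).
Lemma bridge (f : C -> C) x l : isdA f x l -> isdC f x l.
Proof. intros [_ H]. split. apply is_linear_scal_l. intros y Hy eps. exact (H y Hy eps). Qed.
Lemma bridge2 (f : C -> C) x l : isdC f x l -> isdA f x l.
Proof. intros [_ H]. split. apply is_linear_scal_l. intros y Hy eps. exact (H y Hy eps). Qed.

Lemma exdC_id x : exdC (fun w => w) x.
Proof. eexists. apply bridge. apply is_derive_id. Qed.
Lemma exdC_const (c x : C) : exdC (fun _ => c) x.
Proof. eexists. apply bridge. apply (is_derive_const (K:=C_AbsRing) (V:=AbsRing_NormedModule C_AbsRing)). Qed.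
Lemma exdC_minus (f g : C -> C) x : exdC f x -> exdC g x -> exdC (fun w => f w - g w)%C x.
Proof. intros [l1 H1] [l2 H2]. eexists. exact (is_derive_minus f g x l1 l2 H1 H2). Qed.
Lemma exdC_mult (f g : C -> C) x : exdC f x -> exdC g x -> exdC (fun w => f w * g w)%C x.
Proof. intros [l1 H1] [l2 H2]. eexists. apply bridge.
  exact (is_derive_mult f g x l1 l2 (bridge2 _ _ _ H1) (bridge2 _ _ _ H2) Cmult_comm). Qed.
Lemma exdC_comp (f g : C -> C) x : exdC f (g x) -> exdC g x -> exdC (fun w => f (g w)) x.
Proof. intros H1 [l H2]. apply (ex_derive_comp f g x H1). exists l. apply bridge2. exact H2. Qed.

Lemma isdC_inv (x0 : C) : x0 <> 0%C -> isdC Cinv x0 (- (/ x0 * / x0))%C.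
Proof.
  intros Hx. apply isdC_intro. intros eps Heps.
  set (m := Cmod x0). assert (Hm : 0 < m) by (apply Cmod_gt_0; auto).
  exists (Rmin (m / 2) (eps * (m * m * m) / 2)). split.
  { assert (0 < m * m * m) by (repeat apply Rmult_lt_0_compat; lra).
    apply Rmin_pos. lra. apply Rdiv_lt_0_compat; [|lra]. apply Rmult_lt_0_compat; lra. }
  intros y Hy.
  assert (Hy1 : Cmod (y - x0) < m / 2) by (eapply Rlt_le_trans; [apply Hy| apply Rmin_l]).
  assert (Hy2 : Cmod (y - x0) < eps * (m * m * m) / 2) by (eapply Rlt_le_trans; [apply Hy| apply Rmin_r]).
  assert (Hym : m / 2 <= Cmod y).
  { pose proof (Cmod_triangle (x0 - y)%C y). replace (x0 - y + y)%C with x0 in H by ring.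
    replace (x0 - y)%C with (- (y - x0))%C in H by ring. rewrite Cmod_opp in H. fold m in H. lra. }
  assert (Hy0 : y <> 0%C). { intros E. rewrite E, Cmod_0 in Hym. lra. }
  replace (/ y - / x0 - - (/ x0 * / x0) * (y - x0))%C with ((y - x0) * (y - x0) * / (x0 * x0 * y))%C
    by (field; split; auto).
  rewrite !Cmod_mult, Cmod_inv, !Cmod_mult by (repeat apply Cmult_neq_0; auto).
  fold m. set (e := Cmod (y - x0)). assert (0 <= e) by apply Cmod_ge_0.
  apply Rle_trans with (e * e * / (m * m * (m / 2))).
  { apply Rmult_le_compat_l. nra. apply Rinv_le_contravar. assert (0 < m * m) by nra. nra. nra. }
  rewrite Rmult_assoc. rewrite (Rmult_comm eps). apply Rmult_le_compat_l. auto.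
  apply Rmult_le_reg_r with (m * m * (m / 2)). assert (0 < m * m) by nra. nra.
  rewrite Rmult_assoc, Rinv_l by (assert (0 < m * m) by nra; nra). fold e in Hy2. lra.
Qed.

Lemma exdC_inv (f : C -> C) x : exdC f x -> f x <> 0%C -> exdC (fun w => / f w)%C x.
Proof. intros H Hn. apply (exdC_comp Cinv f x); auto. eexists. apply isdC_inv; auto. Qed.

Definition Cexp (w : C) : C := (exp (fst w) * cos (snd w), exp (fst w) * sin (snd w)).

Lemma Cexp_add w h : Cexp (w + h)%C = (Cexp w * Cexp h)%C.
Proof.
  destruct w as [a b], h as [p q]. unfold Cexp, Cmult, Cplus; simpl.
  rewrite exp_plus, cos_plus, sin_plus. f_equal; ring.
Qed.

Lemma Cmod_Cexp w : Cmod (Cexp w) = exp (fst w).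
Proof.
  destruct w as [a b]. unfold Cmod, Cexp; cbn [fst snd].
  replace ((exp a * cos b) ^ 2 + (exp a * sin b) ^ 2) with (exp a ^ 2).
  apply sqrt_pow2. left; apply exp_pos.
  pose proof (sin2_cos2 b). unfold Rsqr in H. nra.
Qed.

Lemma dlim_small f l : derivable_pt_lim f 0 l -> forall eps, 0 < eps -> exists d, 0 < d /\
  forall h, Rabs h < d -> Rabs (f h - f 0 - l * h) <= eps * Rabs h.
Proof.
  intros H eps He. destruct (H eps He) as [d Hd]. exists (pos d). split. apply cond_pos.
  intros h Hh. destruct (Req_dec h 0) as [E|E].
  - subst. rewrite Rmult_0_r, Rabs_R0, Rmult_0_r. replace (f 0 - f 0 - 0) with 0 by ring.
    rewrite Rabs_R0. lra.
  - specialize (Hd h E Hh). rewrite Rplus_0_l in Hd.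
    replace (f h - f 0 - l * h) with (((f h - f 0) / h - l) * h) by (field; auto).
    rewrite Rabs_mult. apply Rmult_le_compat_r. apply Rabs_pos. lra.
Qed.

Lemma Cexp_small eps : 0 < eps -> exists rho, 0 < rho /\ forall h, Cmod h < rho ->
  Cmod (Cexp h - 1 - h)%C <= eps * Cmod h.
Proof.
  intros He. set (e1 := Rmin (eps / 9) 1).
  assert (He1 : 0 < e1) by (apply Rmin_pos; lra).
  assert (He1a : e1 <= eps / 9) by apply Rmin_l.
  assert (He1b : e1 <= 1) by apply Rmin_r.
  destruct (dlim_small exp 1 derivable_pt_lim_exp_0 e1 He1) as [d1 [Hd1 D1]].
  destruct (dlim_small cos (- sin 0) (derivable_pt_lim_cos 0) e1 He1) as [d2 [Hd2 D2]].
  destruct (dlim_small sin (cos 0) (derivable_pt_lim_sin 0) e1 He1) as [d3 [Hd3 D3]].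
  rewrite sin_0 in D2. rewrite cos_0 in D3. rewrite exp_0 in D1. rewrite cos_0 in D2. rewrite sin_0 in D3.
  exists (Rmin (Rmin d1 d2) (Rmin d3 e1)). split.
  { repeat apply Rmin_pos; lra. }
  intros [p q] Hh.
  pose proof (abs_fst_le (p, q)) as Ap. pose proof (abs_snd_le (p, q)) as Aq. simpl in Ap, Aq.
  set (m := Cmod (p, q)) in *.
  assert (m < d1 /\ m < d2 /\ m < d3 /\ m < e1).
  { pose proof (Rmin_l (Rmin d1 d2) (Rmin d3 e1)). pose proof (Rmin_r (Rmin d1 d2) (Rmin d3 e1)).
    pose proof (Rmin_l d1 d2). pose proof (Rmin_r d1 d2). pose proof (Rmin_l d3 e1). pose proof (Rmin_r d3 e1).
    lra. }
  specialize (D1 p ltac:(lra)). specialize (D2 q ltac:(lra)). specialize (D3 q ltac:(lra)).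
  assert (Ep : exp p <= 3).
  { assert (p <= 1). { apply Rabs_le_between in Ap; apply Rle_trans with m; lra. }
    apply Rle_trans with (exp 1). destruct H0 as [H0|H0]; [left; apply exp_increasing; auto| rewrite H0; right; reflexivity]. apply exp_le_3. }
  eapply Rle_trans. apply Cmod_le_abs. unfold Cexp, Cminus, Cplus, Copp, RtoC; simpl.
  assert (F1 : Rabs (exp p * cos q + - (1) + - p) <= 4 * e1 * m).
  { replace (exp p * cos q + - (1) + - p) with ((exp p - 1 - 1 * p) + exp p * (cos q - 1 - - 0 * q)) by ring.
    eapply Rle_trans. apply Rabs_triang. rewrite Rabs_mult. rewrite (Rabs_right (exp p)) by (left; apply exp_pos).
    assert (0 < exp p) by apply exp_pos.
    assert (exp p * Rabs (cos q - 1 - - 0 * q) <= 3 * (e1 * Rabs q)).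
    { apply Rmult_le_compat; try lra. apply Rabs_pos. }
    nra. }
  assert (F2 : Rabs (exp p * sin q + - 0 + - q) <= 5 * e1 * m).
  { replace (exp p * sin q + - 0 + - q) with ((exp p - 1) * sin q + (sin q - 0 - 1 * q)) by ring.
    eapply Rle_trans. apply Rabs_triang. rewrite Rabs_mult.
    assert (A1 : Rabs (exp p - 1) <= 2 * Rabs p).
    { replace (exp p - 1) with ((exp p - 1 - 1 * p) + p) by ring. eapply Rle_trans. apply Rabs_triang. pose proof (Rabs_pos p). nra. }
    assert (A2 : Rabs (sin q) <= 2 * m).
    { replace (sin q) with ((sin q - 0 - 1 * q) + q) by ring. eapply Rle_trans. apply Rabs_triang. pose proof (Rabs_pos q). nra. }
    assert (Rabs (exp p - 1) * Rabs (sin q) <= (2 * m) * (2 * m)).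
    { apply Rmult_le_compat; try apply Rabs_pos; nra. }
    assert (0 <= m) by (unfold m; apply Cmod_ge_0).
    nra. }
  assert (0 <= m) by (unfold m; apply Cmod_ge_0).
  fold m. nra.
Qed.

Lemma isdC_Cexp x : isdC Cexp x (Cexp x).
Proof.
  apply isdC_intro. intros eps He.
  set (M := Cmod (Cexp x)). assert (HM : 0 < M) by (unfold M; rewrite Cmod_Cexp; apply exp_pos).
  destruct (Cexp_small (eps / M)) as [rho [Hr H]]. apply Rdiv_lt_0_compat; auto.
  exists rho. split; auto. intros y Hy.
  replace (Cexp y - Cexp x - Cexp x * (y - x))%C with (Cexp x * (Cexp (y - x) - 1 - (y - x)))%C.
  rewrite Cmod_mult. fold M. specialize (H _ Hy).
  apply Rle_trans with (M * (eps / M * Cmod (y - x))). apply Rmult_le_compat_l; lra.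
  right. field. lra.
  assert (Ey : Cexp y = (Cexp x * Cexp (y - x))%C) by (rewrite <- Cexp_add; f_equal; ring).
  rewrite Ey. ring.
Qed.

Lemma exdC_Cexp_comp (f : C -> C) x : exdC f x -> exdC (fun w => Cexp (f w)) x.
Proof. intros H. apply exdC_comp; auto. eexists. apply isdC_Cexp. Qed.

Lemma CIok_chasles h a b c : CIok h a b -> CIok h b c -> CIok h a c.
Proof. intros [? ?] [? ?]; split; eapply (ex_RInt_Chasles (V:=R_NormedModule)); eauto. Qed.

Lemma Rect_annulus g A B Cc D E F G H :
  RectOk g A D E F -> RectOk g A D G H -> RectOk g A B F G -> RectOk g Cc D F G -> RectOk g B Cc F G ->
  Rect g A D E H = (Rect g A D E F + Rect g A D G H + Rect g A B F G + Rect g Cc D F G + Rect g B Cc F G)%C.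
Proof.
  intros (b1&b2&b3&b4) (t1&t2&t3&t4) (l1&l2&l3&l4) (r1&r2&r3&r4) (c1&c2&c3&c4).
  assert (X1 : CIok (fun t => g (D, t)) F H) by (apply CIok_chasles with G; auto).
  assert (X2 : CIok (fun t => g (A, t)) F H) by (apply CIok_chasles with G; auto).
  assert (X3 : CIok (fun t => g (t, F)) B D) by (apply CIok_chasles with Cc; auto).
  assert (X4 : CIok (fun t => g (t, G)) B D) by (apply CIok_chasles with Cc; auto).
  unfold Rect.
  rewrite <- (CI_chasles (fun t => g (D, t)) E F H) by auto.
  rewrite <- (CI_chasles (fun t => g (D, t)) F G H) by auto.
  rewrite <- (CI_chasles (fun t => g (A, t)) E F H) by auto.
  rewrite <- (CI_chasles (fun t => g (A, t)) F G H) by auto.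
  rewrite <- (CI_chasles (fun t => g (t, F)) A B D) by auto.
  rewrite <- (CI_chasles (fun t => g (t, F)) B Cc D) by auto.
  rewrite <- (CI_chasles (fun t => g (t, G)) A B D) by auto.
  rewrite <- (CI_chasles (fun t => g (t, G)) B Cc D) by auto.
  ring.
Qed.

Lemma RectOk_bd g a b c d : a <= b -> c <= d ->
  (forall t, a <= t <= b -> Ccont_at g (t, c) /\ Ccont_at g (t, d)) ->
  (forall t, c <= t <= d -> Ccont_at g (a, t) /\ Ccont_at g (b, t)) -> RectOk g a b c d.
Proof.
  intros Hab Hcd H1 H2. split; [|split; [|split]].
  - apply CIok_h; auto. intros t Ht; apply H1; auto.
  - apply CIok_v; auto. intros t Ht; apply H2; auto.
  - apply CIok_h; auto. intros t Ht; apply H1; auto.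
  - apply CIok_v; auto. intros t Ht; apply H2; auto.
Qed.

Lemma Rect_le4 g a b c d : Cmod (Rect g a b c d) <=
  Cmod (CI (fun t => g (t, c)) a b) + Cmod (CI (fun t => g (b, t)) c d) +
  Cmod (CI (fun t => g (t, d)) a b) + Cmod (CI (fun t => g (a, t)) c d).
Proof.
  unfold Rect.
  set (A := CI (fun t => g (t, c)) a b).
  set (B := CI (fun t => g (b, t)) c d).
  set (Cc := CI (fun t => g (t, d)) a b).
  set (D := CI (fun t => g (a, t)) c d).
  assert (Cmod (Ci * B) = Cmod B) by (rewrite Cmod_mult, Cmod_Ci; ring).
  assert (Cmod (Ci * D) = Cmod D) by (rewrite Cmod_mult, Cmod_Ci; ring).
  unfold Cminus.
  eapply Rle_trans. apply Cmod_triangle. rewrite Cmod_opp.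
  eapply Rle_trans. apply Rplus_le_compat_r. apply Cmod_triangle. rewrite Cmod_opp.
  eapply Rle_trans. apply Rplus_le_compat_r. apply Rplus_le_compat_r. apply Cmod_triangle.
  lra.
Qed.

Lemma Jlow sg p q : 0 < sg -> Rabs p <= sg -> q = sg -> 1 / (2 * sg) <= q / (p ^ 2 + q ^ 2).
Proof.
  intros Hs Hp ->. apply Rabs_le_between in Hp.
  assert (0 < p ^ 2 + sg ^ 2) by nra.
  unfold Rdiv. rewrite Rmult_1_l.
  apply Rmult_le_reg_r with (2 * sg * (p ^ 2 + sg ^ 2)). nra.
  replace (/ (2 * sg) * (2 * sg * (p ^ 2 + sg ^ 2))) with (p ^ 2 + sg ^ 2) by (field; lra).
  replace (sg * / (p ^ 2 + sg ^ 2) * (2 * sg * (p ^ 2 + sg ^ 2))) with (2 * sg * sg) by (field; lra).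
  nra.
Qed.
Lemma Jhigh sg p q : 0 < sg -> Rabs p <= sg -> q = - sg -> q / (p ^ 2 + q ^ 2) <= - (1 / (2 * sg)).
Proof.
  intros Hs Hp ->. pose proof (Jlow sg p sg Hs Hp eq_refl).
  replace ((- sg) ^ 2) with (sg ^ 2) by ring.
  replace (- sg / (p ^ 2 + sg ^ 2)) with (- (sg / (p ^ 2 + sg ^ 2))) by (unfold Rdiv; ring).
  lra.
Qed.

Lemma JlowG sg p q r : 0 < sg -> Rabs p <= sg -> q = sg -> r ^ 2 = sg ^ 2 -> 1 / (2 * sg) <= q / (p ^ 2 + r ^ 2).
Proof. intros H1 H2 H3 H4. rewrite H4, H3. apply Jlow; auto. Qed.
Lemma JlowG' sg p q r : 0 < sg -> Rabs p <= sg -> q = sg -> r ^ 2 = sg ^ 2 -> 1 / (2 * sg) <= q / (r ^ 2 + p ^ 2).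
Proof. intros. rewrite Rplus_comm. apply JlowG; auto. Qed.
Lemma JhighG sg p q r : 0 < sg -> Rabs p <= sg -> q = - sg -> r ^ 2 = sg ^ 2 -> q / (p ^ 2 + r ^ 2) <= - (1 / (2 * sg)).
Proof. intros H1 H2 H3 H4. replace (r ^ 2) with ((- sg) ^ 2) by (rewrite H4; ring). rewrite H3. apply Jhigh; auto. Qed.
Lemma JhighG' sg p q r : 0 < sg -> Rabs p <= sg -> q = - sg -> r ^ 2 = sg ^ 2 -> q / (r ^ 2 + p ^ 2) <= - (1 / (2 * sg)).
Proof. intros. rewrite Rplus_comm. apply JhighG; auto. Qed.

Lemma RInt_ge_k (f : R -> R) a b k : a <= b -> ex_RInt f a b -> (forall t, a <= t <= b -> k <= f t) -> (b - a) * k <= RInt f a b.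
Proof.
  intros Hab Hf H. replace ((b - a) * k) with (RInt (fun _ => k) a b) by (rewrite RInt_const; reflexivity).
  apply RInt_le; auto. apply ex_RInt_const. intros t Ht; apply H; lra.
Qed.
Lemma RInt_le_k (f : R -> R) a b k : a <= b -> ex_RInt f a b -> (forall t, a <= t <= b -> f t <= k) -> RInt f a b <= (b - a) * k.
Proof.
  intros Hab Hf H. replace ((b - a) * k) with (RInt (fun _ => k) a b) by (rewrite RInt_const; reflexivity).
  apply RInt_le; auto. apply ex_RInt_const. intros t Ht; apply H; lra.
Qed.

Lemma J_lower x y sg : 0 < sg ->
  RectOk (fun w => / (w - (x, y)))%C (x - sg) (x + sg) (y - sg) (y + sg) ->
  4 <= Cmod (Rect (fun w => / (w - (x, y)))%C (x - sg) (x + sg) (y - sg) (y + sg)).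
Proof.
  intros Hs ((_&O1)&(O2&_)&(_&O3)&(O4&_)).
  eapply Rle_trans; [|apply abs_snd_le]. eapply Rle_trans; [|apply Rle_abs].
  unfold Rect, CI.
  set (I1 := RInt (fun t => snd (/ ((t, (y - sg)%R) - (x, y)))%C) (x - sg) (x + sg)) in *.
  set (I2 := RInt (fun t => fst (/ (((x + sg)%R, t) - (x, y)))%C) (y - sg) (y + sg)) in *.
  set (I3 := RInt (fun t => snd (/ ((t, (y + sg)%R) - (x, y)))%C) (x - sg) (x + sg)) in *.
  set (I4 := RInt (fun t => fst (/ (((x - sg)%R, t) - (x, y)))%C) (y - sg) (y + sg)) in *.
  assert (K : (x + sg - (x - sg)) * (1 / (2 * sg)) = 1) by (field; lra).
  assert (K' : (y + sg - (y - sg)) * (1 / (2 * sg)) = 1) by (field; lra).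
  assert (B1 : 1 <= I1).
  { rewrite <- K. apply RInt_ge_k; auto. lra. intros t Ht.
    unfold Cinv, Cminus, Cplus, Copp; cbn [fst snd]. apply JlowG with (sg := sg); auto.
    apply Rabs_le; lra. ring. ring. }
  assert (B2 : 1 <= I2).
  { rewrite <- K'. apply RInt_ge_k; auto. lra. intros t Ht.
    unfold Cinv, Cminus, Cplus, Copp; cbn [fst snd]. apply JlowG' with (sg := sg); auto.
    apply Rabs_le; lra. ring. ring. }
  assert (B3 : I3 <= -1).
  { replace (-1) with ((x + sg - (x - sg)) * (- (1 / (2 * sg)))) by (field; lra).
    apply RInt_le_k; auto. lra. intros t Ht.
    unfold Cinv, Cminus, Cplus, Copp; cbn [fst snd]. apply JhighG with (sg := sg); auto.
    apply Rabs_le; lra. ring. ring. }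
  assert (B4 : I4 <= -1).
  { replace (-1) with ((y + sg - (y - sg)) * (- (1 / (2 * sg)))) by (field; lra).
    apply RInt_le_k; auto. lra. intros t Ht.
    unfold Cinv, Cminus, Cplus, Copp; cbn [fst snd]. apply JhighG' with (sg := sg); auto.
    apply Rabs_le; lra. ring. ring. }
  unfold Cminus, Cplus, Copp, Cmult, Ci; cbn [fst snd]. lra.
Qed.

Lemma RInt_gen_le (h : R -> R) l A B : A <= B -> (forall t, 0 <= h t) -> (forall a b, ex_RInt h a b) ->
  is_RInt_gen h (Rbar_locally m_infty) (Rbar_locally p_infty) l -> RInt h A B <= l.
Proof.
  intros HAB Hpos Hex H. apply Rnot_lt_le. intros Hlt.
  set (I := RInt h A B) in *.
  assert (He : 0 < I - l) by lra.
  destruct (H (fun v => Rabs (v - l) < I - l)) as [Q1 Q2 [M1 HQ1] [M2 HQ2] Hp].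
  { exists (mkposreal _ He). intros v Hv. exact Hv. }
  set (a := Rmin A M1 - 1). set (b := Rmax B M2 + 1).
  destruct (Hp a b) as [v [Hv Hv']].
  { apply HQ1. unfold a. pose proof (Rmin_r A M1). lra. }
  { apply HQ2. unfold b. pose proof (Rmax_r B M2). lra. }
  simpl in Hv. apply (is_RInt_unique (V:=R_CompleteNormedModule)) in Hv.
  assert (Ha : a <= A) by (unfold a; pose proof (Rmin_l A M1); lra).
  assert (Hb : B <= b) by (unfold b; pose proof (Rmax_l B M2); lra).
  rewrite <- (R_chasles h a A b) in Hv by auto.
  rewrite <- (R_chasles h A B b) in Hv by auto.
  assert (0 <= RInt h a A) by (apply RInt_ge_0; auto).
  assert (0 <= RInt h B b) by (apply RInt_ge_0; auto).
  fold I in Hv. apply Rabs_lt_between in Hv'. lra.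
Qed.

Lemma exp_mono a b : a <= b -> exp a <= exp b.
Proof. intros [H|H]. left; apply exp_increasing; auto. subst; lra. Qed.

Lemma cont_expabs t0 : continuous (fun t => exp (- PI * Rabs t)) t0.
Proof.
  apply continuity_pt_filterlim.
  apply (continuity_pt_comp (fun t => - PI * Rabs t) exp).
  - apply continuity_pt_mult. apply continuity_pt_const. intros ? ?; reflexivity. apply Rcontinuity_abs.
  - apply derivable_continuous_pt, derivable_pt_exp.
Qed.

Lemma lim_p (f : R -> R) : is_lim f p_infty 0 -> exists Y, forall v, Y < v -> Rabs (f v) < 1.
Proof.
  intros H. destruct (H (fun r => Rabs r < 1)) as [Y HY].
  { exists (mkposreal 1 Rlt_0_1). intros r Hr. change (Rabs (r - 0) < 1) in Hr. rewrite Rminus_0_r in Hr. exact Hr. }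
  exists Y. exact HY.
Qed.
Lemma lim_m (f : R -> R) : is_lim f m_infty 0 -> exists Y, forall v, v < Y -> Rabs (f v) < 1.
Proof.
  intros H. destruct (H (fun r => Rabs r < 1)) as [Y HY].
  { exists (mkposreal 1 Rlt_0_1). intros r Hr. change (Rabs (r - 0) < 1) in Hr. rewrite Rminus_0_r in Hr. exact Hr. }
  exists Y. exact HY.
Qed.

Section Main.
Variable Phi : C -> C.
Hypothesis Han : analytic_right_half_plane Phi.
Variables x y s : R.
Hypothesis Hs : 0 < s.
Hypothesis Hx2 : 2 * s <= x.

Definition zz : C := (x, y).
Definition ff (w : C) : C := (Phi w / w)%C.
Definition KK (w : C) : C := Cexp ((w - zz) * (w - zz))%C.
Definition FF (w : C) : C := (ff w * KK w)%C.
Definition gg (w : C) : C := (FF w * / (w - zz))%C.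
Definition JJ (w : C) : C := (/ (w - zz))%C.
Definition RmF (w : C) : C := ((FF w - FF zz) * / (w - zz))%C.

Lemma pos_nz (w : C) : 0 < fst w -> w <> 0%C.
Proof. intros H E. rewrite E in H. simpl in H. lra. Qed.
Lemma sub_nz (w : C) : fst w <> x \/ snd w <> y -> (w - zz)%C <> 0%C.
Proof.
  intros H E. destruct w as [p q]. unfold zz, Cminus, Cplus, Copp, RtoC in E. simpl in *.
  injection E; intros E2 E1. destruct H; lra.
Qed.

Lemma exd_ff w : 0 < fst w -> exdC ff w.
Proof.
  intros H. unfold ff, Cdiv. apply exdC_mult. apply Han; auto.
  apply (exdC_inv (fun w => w)). apply exdC_id. apply pos_nz; auto.
Qed.
Lemma exd_KK w : exdC KK w.
Proof.
  unfold KK. apply (exdC_Cexp_comp (fun w => (w - zz) * (w - zz))%C).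
  apply exdC_mult; apply exdC_minus; first [apply exdC_id | apply exdC_const].
Qed.
Lemma exd_FF w : 0 < fst w -> exdC FF w.
Proof. intros H. unfold FF. apply exdC_mult. apply exd_ff; auto. apply exd_KK. Qed.
Lemma exd_JJ w : (w - zz)%C <> 0%C -> exdC JJ w.
Proof.
  intros H. unfold JJ. apply (exdC_inv (fun w => w - zz)%C); auto.
  apply exdC_minus; [apply exdC_id | apply exdC_const].
Qed.
Lemma exd_gg w : 0 < fst w -> (w - zz)%C <> 0%C -> exdC gg w.
Proof. intros H1 H2. unfold gg. apply exdC_mult. apply exd_FF; auto. apply exd_JJ; auto. Qed.
Lemma exd_Rm w : 0 < fst w -> (w - zz)%C <> 0%C -> exdC RmF w.
Proof. intros H1 H2. unfold RmF. apply exdC_mult. apply exdC_minus. apply exd_FF; auto. apply exdC_const.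
  apply exd_JJ; auto. Qed.

Lemma Cmod_KK w : Cmod (KK w) = exp ((fst w - x) * (fst w - x) - (snd w - y) * (snd w - y)).
Proof. unfold KK. rewrite Cmod_Cexp. destruct w; unfold zz; simpl; f_equal; ring. Qed.

Lemma FF_zz : Cmod (FF zz) = Cmod (ff zz).
Proof. unfold FF. rewrite Cmod_mult, Cmod_KK. unfold zz; simpl.
  replace ((x - x) * (x - x) - (y - y) * (y - y)) with 0 by ring. rewrite exp_0. ring. Qed.

Lemma x_pos : 0 < x.
Proof. lra. Qed.

Lemma cauchy T : s < T -> 4 * Cmod (ff zz) <= Cmod (Rect gg (x - s) (x + s) (y - T) (y + T)).
Proof.
  intros HT. apply Rle_plus_epsilon. intros eps He.
  assert (HF := exd_ccont _ _ (exd_FF zz x_pos)).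
  assert (He16 : 0 < eps / 16) by lra.
  destruct (HF _ He16) as [del [Hdel HFd]].
  set (sg := Rmin (del / 4) (s / 2)).
  assert (Hsg : 0 < sg) by (apply Rmin_pos; lra).
  assert (Hsg1 : sg <= del / 4) by apply Rmin_l.
  assert (Hsg2 : sg <= s / 2) by apply Rmin_r.
  assert (Cg : forall w, 0 < fst w -> (fst w <> x \/ snd w <> y) -> Ccont_at gg w).
  { intros w H1 H2. apply exd_ccont. apply exd_gg; auto. apply sub_nz; auto. }
  assert (Dg : forall w, 0 < fst w -> (fst w <> x \/ snd w <> y) -> exdC gg w).
  { intros w H1 H2. apply exd_gg; auto. apply sub_nz; auto. }
  assert (E1 : Rect gg (x - s) (x + s) (y - T) (y + T) = Rect gg (x - sg) (x + sg) (y - sg) (y + sg)).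
  { rewrite (Rect_annulus gg (x - s) (x - sg) (x + sg) (x + s) (y - T) (y - sg) (y + sg) (y + T)).
    - rewrite (goursat gg (x - s) (x + s) (y - T) (y - sg)) by (lra || (intros w H1 H2; apply Dg; lra)).
      rewrite (goursat gg (x - s) (x + s) (y + sg) (y + T)) by (lra || (intros w H1 H2; apply Dg; lra)).
      rewrite (goursat gg (x - s) (x - sg) (y - sg) (y + sg)) by (lra || (intros w H1 H2; apply Dg; lra)).
      rewrite (goursat gg (x + sg) (x + s) (y - sg) (y + sg)) by (lra || (intros w H1 H2; apply Dg; lra)).
      ring.
    - apply RectOk_cont; try lra. intros w H1 H2; apply Cg; lra.
    - apply RectOk_cont; try lra. intros w H1 H2; apply Cg; lra.
    - apply RectOk_cont; try lra. intros w H1 H2; apply Cg; lra.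
    - apply RectOk_cont; try lra. intros w H1 H2; apply Cg; lra.
    - apply RectOk_bd; try lra.
      + intros t Ht; split; apply Cg; simpl; lra.
      + intros t Ht; split; apply Cg; simpl; lra. }
  assert (OkJ : RectOk JJ (x - sg) (x + sg) (y - sg) (y + sg)).
  { apply RectOk_bd; try lra.
    + intros t Ht; split; apply exd_ccont, exd_JJ, sub_nz; simpl; lra.
    + intros t Ht; split; apply exd_ccont, exd_JJ, sub_nz; simpl; lra. }
  assert (OkR : RectOk RmF (x - sg) (x + sg) (y - sg) (y + sg)).
  { apply RectOk_bd; try lra.
    + intros t Ht; split; apply exd_ccont, exd_Rm; simpl; try lra; apply sub_nz; simpl; lra.
    + intros t Ht; split; apply exd_ccont, exd_Rm; simpl; try lra; apply sub_nz; simpl; lra. }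
  assert (E2 : Rect gg (x - sg) (x + sg) (y - sg) (y + sg) =
     (FF zz * Rect JJ (x - sg) (x + sg) (y - sg) (y + sg) + Rect RmF (x - sg) (x + sg) (y - sg) (y + sg))%C).
  { rewrite (Rect_ext gg (fun w => FF zz * JJ w + RmF w)%C).
    rewrite Rect_plus. rewrite Rect_cmul. reflexivity. auto.
    apply RectOk_cmul; auto. auto.
    intros w. unfold gg, JJ, RmF. ring. }
  assert (L4 : 4 <= Cmod (Rect JJ (x - sg) (x + sg) (y - sg) (y + sg))).
  { apply (J_lower x y sg Hsg OkJ). }
  assert (Pt : forall w, sg <= Cmod (w - zz) -> Rabs (fst w - x) <= sg -> Rabs (snd w - y) <= sg ->
      Cmod (RmF w) <= eps / 16 / sg).
  { intros w H1 H2 H3.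
    assert (Hc : Cmod (w - zz) < del).
    { eapply Rle_lt_trans. apply Cmod_fst_snd_sub. unfold zz; simpl. lra. }
    assert (Hnz : (w - zz)%C <> 0%C). { intros E. rewrite E, Cmod_0 in H1. lra. }
    unfold RmF. rewrite Cmod_mult, Cmod_inv by auto.
    specialize (HFd w Hc).
    apply Rle_trans with (eps / 16 * / Cmod (w - zz)).
    apply Rmult_le_compat_r. left; apply Rinv_0_lt_compat; lra. lra.
    unfold Rdiv. apply Rmult_le_compat_l. lra. apply Rinv_le_contravar; lra. }
  assert (BR : Cmod (Rect RmF (x - sg) (x + sg) (y - sg) (y + sg)) <= eps).
  { eapply Rle_trans. apply Rect_bound; try lra. auto.
    - intros t Ht; split; apply Pt; unfold zz; simpl;
        try (apply Rabs_le; lra);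
        (eapply Rle_trans; [|apply abs_snd_le]; simpl;
         first [rewrite Rabs_left by lra | rewrite Rabs_right by lra]; lra).
    - intros t Ht; split; apply Pt; unfold zz; simpl;
        try (apply Rabs_le; lra);
        (eapply Rle_trans; [|apply abs_fst_le]; simpl;
         first [rewrite Rabs_left by lra | rewrite Rabs_right by lra]; lra).
    - right. field. lra. }
  rewrite E1, E2 in *.
  set (RJ := Rect JJ (x - sg) (x + sg) (y - sg) (y + sg)) in *.
  set (RR0 := Rect RmF (x - sg) (x + sg) (y - sg) (y + sg)) in *.
  assert (Cmod (FF zz * RJ)%C <= Cmod (FF zz * RJ + RR0)%C + Cmod RR0).
  { pose proof (Cmod_triangle (FF zz * RJ + RR0)%C (- RR0)%C). rewrite Cmod_opp in H.
    replace (FF zz * RJ + RR0 + - RR0)%C with (FF zz * RJ)%C in H by ring. exact H. }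
  rewrite Cmod_mult, FF_zz in H.
  assert (0 <= Cmod (ff zz)) by apply Cmod_ge_0.
  nra.
Qed.

Lemma ff_cont_h v t0 : 0 < t0 -> continuous (fun t => absratio Phi t v) t0.
Proof.
  intros H. apply (hline_cont ff v t0). apply exd_ccont, exd_ff. simpl; lra.
Qed.
Lemma ff_cont_v u t0 : 0 < u -> continuous (fun t => absratio Phi u t) t0.
Proof.
  intros H. apply (vline_cont ff u t0). apply exd_ccont, exd_ff. simpl; lra.
Qed.

Lemma Cmod_gg w : (w - zz)%C <> 0%C ->
  Cmod (gg w) = Cmod (ff w) * exp ((fst w - x) * (fst w - x) - (snd w - y) * (snd w - y)) * / Cmod (w - zz).
Proof. intros H. unfold gg, FF. rewrite !Cmod_mult, Cmod_KK, Cmod_inv by auto. reflexivity. Qed.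

Lemma hside v T : PI <= T -> Rabs (v - y) = T ->
  exp (- PI * Rabs v) * RInt (fun t => absratio Phi t v) (x - s) (x + s) < 1 ->
  Cmod (CI (fun t => gg (t, v)) (x - s) (x + s)) <= 2 * (exp (s * s) * exp (PI * Rabs y)).
Proof.
  intros HT Hv Hlim. pose proof PI2_3_2.
  assert (HT0 : 1 < T) by lra.
  assert (Hnz : forall t, ((t, v) - zz)%C <> 0%C).
  { intros t. apply sub_nz. right. simpl. intros E. rewrite E, Rminus_diag, Rabs_R0 in Hv. lra. }
  set (coef := exp (s * s - T * T) / T).
  assert (Hcoef : 0 < coef) by (unfold coef; apply Rdiv_lt_0_compat; [apply exp_pos| lra]).
  assert (Ex : ex_RInt (fun t => absratio Phi t v) (x - s) (x + s)).
  { apply (ex_RInt_continuous (V:=R_CompleteNormedModule)). intros t Ht.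
    rewrite Rmin_left in Ht by lra. apply ff_cont_h. lra. }
  eapply Rle_trans. apply (CI_bound_int _ (fun t => coef * absratio Phi t v)); try lra.
  - apply CIok_h; try lra. intros t Ht. apply exd_ccont, exd_gg. simpl; lra. apply Hnz.
  - apply exR_scal; auto.
  - intros t Ht. rewrite Cmod_gg by apply Hnz. simpl.
    assert (Cmod (ff (t, v)) = absratio Phi t v) by reflexivity.
    rewrite H0. unfold coef. unfold Rdiv.
    assert (0 <= absratio Phi t v) by apply Cmod_ge_0.
    assert (Hc : T <= Cmod ((t, v) - zz)%C).
    { eapply Rle_trans; [|apply abs_snd_le]. unfold zz; simpl. rewrite <- Hv. right. reflexivity. }
    assert (Hexp : exp ((t - x) * (t - x) - (v - y) * (v - y)) <= exp (s * s - T * T)).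
    { apply exp_mono. rewrite <- Hv. assert ((v - y) * (v - y) = Rabs (v - y) * Rabs (v - y)).
      { rewrite <- Rabs_mult. rewrite Rabs_right. reflexivity. apply Rle_ge, Rle_0_sqr. }
      rewrite H2. rewrite Hv. nra. }
    assert (/ Cmod ((t, v) - zz)%C <= / T) by (apply Rinv_le_contravar; lra).
    assert (0 < / T) by (apply Rinv_0_lt_compat; lra).
    assert (0 < exp ((t - x) * (t - x) - (v - y) * (v - y))) by apply exp_pos.
    assert (0 <= / Cmod ((t, v) - zz)%C) by (left; apply Rinv_0_lt_compat; lra).
    apply Rle_trans with (absratio Phi t v * exp (s * s - T * T) * / T).
    { apply Rmult_le_compat; try nra; try (apply Rmult_le_compat_l; lra). }
    right. ring.
  - rewrite R_scal by auto.
    assert (I1 : RInt (fun t => absratio Phi t v) (x - s) (x + s) < exp (PI * Rabs v)).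
    { replace (RInt (fun t => absratio Phi t v) (x - s) (x + s)) with
        (exp (PI * Rabs v) * (exp (- PI * Rabs v) * RInt (fun t => absratio Phi t v) (x - s) (x + s))).
      pose proof (exp_pos (PI * Rabs v)). nra.
      rewrite <- Rmult_assoc, <- exp_plus. replace (PI * Rabs v + - PI * Rabs v) with 0 by ring.
      rewrite exp_0. ring. }
    assert (Hv2 : Rabs v <= Rabs y + T).
    { rewrite <- Hv. replace v with ((v - y) + y) at 1 by ring. pose proof (Rabs_triang (v - y) y). lra. }
    assert (I2 : exp (PI * Rabs v) <= exp (PI * Rabs y + PI * T)).
    { apply exp_mono. pose proof PI_RGT_0. nra. }
    assert (coef * exp (PI * Rabs y + PI * T) <= exp (s * s) * exp (PI * Rabs y)).
    { unfold coef, Rdiv. rewrite Rmult_comm, <- Rmult_assoc, <- exp_plus.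
      rewrite <- exp_plus.
      apply Rle_trans with (exp (s * s + PI * Rabs y) * 1).
      apply Rmult_le_compat. left; apply exp_pos. left; apply Rinv_0_lt_compat; lra.
      apply exp_mono. nra.
      rewrite <- Rinv_1. apply Rinv_le_contravar; lra. right; ring. }
    nra.
Qed.

Definition Cv := exp (s * s) * exp (PI * PI / 4) / s.

Lemma gauss_pi q t : - (q * q) <= PI * PI / 4 + PI * Rabs (t + q) - PI * Rabs t.
Proof.
  pose proof PI_RGT_0.
  assert (Rabs t <= Rabs (t + q) + Rabs q).
  { replace t with ((t + q) + - q) at 1 by ring. pose proof (Rabs_triang (t + q) (- q)). rewrite Rabs_Ropp in H0. lra. }
  assert (q * q = Rabs q * Rabs q) by (rewrite <- Rabs_mult; rewrite Rabs_right; [reflexivity| apply Rle_ge, Rle_0_sqr]).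
  assert (0 <= (Rabs q - PI / 2) * (Rabs q - PI / 2)) by apply Rle_0_sqr.
  nra.
Qed.

Lemma vside u T l : Rabs (u - x) = s -> 0 < u -> 0 < T ->
  line_integral Phi u l ->
  Cmod (CI (fun t => gg (u, t)) (y - T) (y + T)) <= 2 * (Cv * exp (PI * Rabs y) * l).
Proof.
  intros Hu Hu0 HT Hl.
  assert (Hnz : forall t, ((u, t) - zz)%C <> 0%C).
  { intros t. apply sub_nz. left. simpl. intros E. rewrite E, Rminus_diag, Rabs_R0 in Hu. lra. }
  set (h := fun t => absratio Phi u t * exp (- PI * Rabs t)).
  assert (Hh : forall a b, ex_RInt h a b).
  { intros a b. apply (ex_RInt_continuous (V:=R_CompleteNormedModule)). intros t _.
    apply (continuous_mult (K:=R_AbsRing)). apply ff_cont_v; auto. apply cont_expabs. }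
  assert (HCv : 0 < Cv * exp (PI * Rabs y)).
  { unfold Cv. apply Rmult_lt_0_compat; [|apply exp_pos]. apply Rdiv_lt_0_compat; auto.
    apply Rmult_lt_0_compat; apply exp_pos. }
  eapply Rle_trans. apply (CI_bound_int _ (fun t => Cv * exp (PI * Rabs y) * h t)); try lra.
  - apply CIok_v; try lra. intros t Ht. apply exd_ccont, exd_gg. simpl; lra. apply Hnz.
  - apply exR_scal; auto.
  - intros t Ht. rewrite Cmod_gg by apply Hnz. simpl.
    assert (Cmod (ff (u, t)) = absratio Phi u t) by reflexivity.
    rewrite H. unfold h, Cv.
    assert (0 <= absratio Phi u t) by apply Cmod_ge_0.
    assert (Hc : s <= Cmod ((u, t) - zz)%C).
    { eapply Rle_trans; [|apply abs_fst_le]. unfold zz; simpl. rewrite <- Hu. right. reflexivity. }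
    assert (Hexp : exp ((u - x) * (u - x) - (t - y) * (t - y)) <=
       exp (s * s) * exp (PI * PI / 4) * exp (PI * Rabs y) * exp (- PI * Rabs t)).
    { rewrite <- !exp_plus. apply exp_mono.
      assert ((u - x) * (u - x) = s * s).
      { rewrite <- Hu. rewrite <- Rabs_mult. rewrite Rabs_right. reflexivity. apply Rle_ge, Rle_0_sqr. }
      pose proof (gauss_pi (t - y) t). replace (t + (t - y)) with (2 * t - y) in H2 by ring.
      pose proof (gauss_pi (y - t) t). replace (t + (y - t)) with y in H3 by ring.
      nra. }
    assert (/ Cmod ((u, t) - zz)%C <= / s) by (apply Rinv_le_contravar; lra).
    assert (0 <= / Cmod ((u, t) - zz)%C) by (left; apply Rinv_0_lt_compat; lra).
    assert (0 < exp ((u - x) * (u - x) - (t - y) * (t - y))) by apply exp_pos.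
    apply Rle_trans with (absratio Phi u t *
       (exp (s * s) * exp (PI * PI / 4) * exp (PI * Rabs y) * exp (- PI * Rabs t)) * / s).
    { apply Rmult_le_compat; try nra; try (apply Rmult_le_compat_l; lra). }
    right. unfold Rdiv. ring.
  - rewrite R_scal by auto.
    assert (RInt h (y - T) (y + T) <= l).
    { apply (RInt_gen_le h l); auto. lra.
      intros t. unfold h. apply Rmult_le_pos. apply Cmod_ge_0. left; apply exp_pos. }
    nra.
Qed.

Lemma bound_z (M : R) : (forall u, s <= u -> exists l, line_integral Phi u l /\ l <= M) -> cond_a Phi ->
  Cmod (ff zz) <= (Cv * Rabs M + exp (s * s)) * exp (PI * Rabs y).
Proof.
  intros HM Ha.
  destruct (Ha (x - s) (x + s)) as [Hp Hm]; try lra.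
  destruct (lim_p _ Hp) as [Y1 HY1]. destruct (lim_m _ Hm) as [Y2 HY2].
  pose proof PI2_3_2.
  set (T := Rabs Y1 + Rabs Y2 + Rabs y + PI + s + 1).
  assert (HA1 := Rabs_pos Y1). assert (HA2 := Rabs_pos Y2). assert (HA3 := Rabs_pos y).
  assert (HT1 : PI <= T) by (unfold T; lra).
  assert (HT2 : s < T) by (unfold T; lra).
  pose proof (cauchy T HT2) as HC.
  pose proof (Rect_le4 gg (x - s) (x + s) (y - T) (y + T)) as H4.
  assert (B1 : Cmod (CI (fun t => gg (t, (y - T)%R)) (x - s) (x + s)) <= 2 * (exp (s * s) * exp (PI * Rabs y))).
  { apply (hside _ T); auto. replace (y - T - y) with (- T) by ring. rewrite Rabs_Ropp, Rabs_right; lra.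
    assert (y - T < Y2).
    { unfold T. pose proof (Rle_abs (- Y2)) as Q1. pose proof (Rle_abs y). rewrite Rabs_Ropp in Q1. lra. }
    specialize (HY2 _ H0). cbv beta in HY2. eapply Rle_lt_trans; [apply Rle_abs| exact HY2]. }
  assert (B3 : Cmod (CI (fun t => gg (t, (y + T)%R)) (x - s) (x + s)) <= 2 * (exp (s * s) * exp (PI * Rabs y))).
  { apply (hside _ T); auto. replace (y + T - y) with T by ring. rewrite Rabs_right; lra.
    assert (Y1 < y + T).
    { unfold T. pose proof (Rle_abs Y1). pose proof (Rle_abs (- y)). rewrite Rabs_Ropp in H1. lra. }
    specialize (HY1 _ H0). cbv beta in HY1. eapply Rle_lt_trans; [apply Rle_abs| exact HY1]. }
  destruct (HM (x + s)) as [l1 [Hl1 Hl1M]]. lra.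
  destruct (HM (x - s)) as [l2 [Hl2 Hl2M]]. lra.
  assert (B2 : Cmod (CI (fun t => gg ((x + s)%R, t)) (y - T) (y + T)) <= 2 * (Cv * exp (PI * Rabs y) * l1)).
  { apply vside; auto; try lra. replace (x + s - x) with s by ring. rewrite Rabs_right; lra. }
  assert (B4 : Cmod (CI (fun t => gg ((x - s)%R, t)) (y - T) (y + T)) <= 2 * (Cv * exp (PI * Rabs y) * l2)).
  { apply vside; auto; try lra. replace (x - s - x) with (- s) by ring. rewrite Rabs_Ropp, Rabs_right; lra. }
  assert (HCv : 0 < Cv * exp (PI * Rabs y)).
  { unfold Cv. apply Rmult_lt_0_compat; [|apply exp_pos]. apply Rdiv_lt_0_compat; auto.
    apply Rmult_lt_0_compat; apply exp_pos. }
  assert (l1 <= Rabs M) by (pose proof (Rle_abs M); lra).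
  assert (l2 <= Rabs M) by (pose proof (Rle_abs M); lra).
  assert (Cv * exp (PI * Rabs y) * l1 <= Cv * exp (PI * Rabs y) * Rabs M) by (apply Rmult_le_compat_l; lra).
  assert (Cv * exp (PI * Rabs y) * l2 <= Cv * exp (PI * Rabs y) * Rabs M) by (apply Rmult_le_compat_l; lra).
  lra.
Qed.
End Main.


Theorem lemma3p1 (Phi : C -> C)
  (Han : analytic_right_half_plane Phi)
  (Ha : cond_a Phi) (Hb : cond_b Phi) (Hc : cond_c Phi)
  (delta : R) (Hdelta : 0 < delta) :
  exists c : R, 0 < c /\
    forall z : C, delta <= Re z ->
      Cmod (Phi z) <= c * Cmod z * exp (PI * Rabs (Im z)).
Proof.
  set (s := delta / 2).
  assert (Hs : 0 < s) by (unfold s; lra).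
  destruct (Hb s Hs) as [M HM].
  assert (HCv : 0 < Cv s).
  { unfold Cv. apply Rdiv_lt_0_compat; auto. apply Rmult_lt_0_compat; apply exp_pos. }
  exists (Cv s * Rabs M + exp (s * s) + 1). split.
  { pose proof (Rabs_pos M). pose proof (exp_pos (s * s)). nra. }
  intros [x y] Hz. simpl in Hz. simpl.
  assert (Hx2 : 2 * s <= x) by (unfold s; lra).
  pose proof (bound_z Phi Han x y s Hs Hx2 M HM Ha) as B.
  assert (Hnz : (x, y) <> RtoC 0).
  { intros E. unfold RtoC in E. injection E. intros. lra. }
  assert (E : Phi (x, y) = (ff Phi (zz x y) * (x, y))%C).
  { unfold ff, zz, Cdiv. field. auto. }
  rewrite E, Cmod_mult.
  pose proof (Cmod_ge_0 (x, y)). pose proof (exp_pos (PI * Rabs y)).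
  pose proof (Cmod_ge_0 (ff Phi (zz x y))).
  apply Rle_trans with ((Cv s * Rabs M + exp (s * s)) * exp (PI * Rabs y) * Cmod (x, y)).
  apply Rmult_le_compat_r; auto.
  nra.
Qed.
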